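(* Let $(G,\precsim)$ be a compatible quasi-ordered abelian group and $H$ a $\precsim$-convex subgroup of $G$. Then for all $g_1,g_2\in G$ with $g_1-g_2\notin H$ and $g_1\precsim g_2$, and all $h_1,h_2\in H$, we have $g_1+h_1\precsim g_2+h_2$. Consequently the relation on $G/H$ defined by $g+H\precsim h+H\Leftrightarrow g-h\in H\vee(g-h\notin H\wedge g\precsim h)$ is a well-defined total quasi-order on $G/H$; moreover $(G/H,\precsim)$ is again a compatible quasi-ordered abelian group, and the canonical projection $G\to G/H$ is a homomorphism of quasi-ordered groups.
   Context: A compatible quasi-ordered abelian group is an abelian group $G$ with a total quasi-order $\precsim$ (reflexive, transitive, any two elements comparable) such that, writing $a\sim b$ for $a\precsim b\wedge b\precsim a$: $(Q_1)$ $x\sim0\Rightarrow x=0$; $(Q_2)$ $x\precsim y\wedge y\not\sim z\Rightarrow x+z\precsim y+z$, for all $x,y,z$. $S$ is $\precsim$-convex if $s,t\in S$, $s\precsim a\precsim t$ imply $a\in S$. A homomorphism of quasi-ordered groups is a group homomorphism $\phi$ with $g_1\precsim g_2\Rightarrow\phi(g_1)\precsim\phi(g_2)$. *)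

(* Defs.v *)
From mathcomp Require Import all_boot all_algebra.
Set Implicit Arguments. Unset Strict Implicit. Unset Printing Implicit Defensive.
Import GRing.Theory.
Local Open Scope ring_scope.

Definition total_quasi_order (T : Type) (le : T -> T -> Prop) : Prop :=
  (forall x, le x x) /\
  (forall x y z, le x y -> le y z -> le x z) /\
  (forall x y, le x y \/ le y x).

Definition qsim (T : Type) (le : T -> T -> Prop) (x y : T) : Prop :=
  le x y /\ le y x.

Definition cqoag (G : zmodType) (le : G -> G -> Prop) : Prop :=
  total_quasi_order le /\
  (forall x, qsim le x 0 -> x = 0) /\
  (forall x y z, le x y -> ~ qsim le y z -> le (x + z) (y + z)).

Definition is_subgroup (G : zmodType) (H : G -> Prop) : Prop :=
  H 0 /\ (forall x y, H x -> H y -> H (x - y)).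

Definition qconvex (T : Type) (le : T -> T -> Prop) (S : T -> Prop) : Prop :=
  forall s t a, S s -> S t -> le s a -> le a t -> S a.

Definition qo_hom (G Q : zmodType) (leG : G -> G -> Prop) (leQ : Q -> Q -> Prop)
  (f : G -> Q) : Prop :=
  (forall x y, f (x + y) = f x + f y) /\
  (forall x y, leG x y -> leQ (f x) (f y)).

Definition rep_rel (G : zmodType) (le : G -> G -> Prop) (H : G -> Prop) (g h : G) : Prop :=
  H (g - h) \/ (~ H (g - h) /\ le g h).

(* the induced relation on a quotient Q of G presented by pi : G -> Q *)
Definition quot_rel (G Q : zmodType) (le : G -> G -> Prop) (H : G -> Prop)
  (pi : G -> Q) (a b : Q) : Prop :=
  exists g h, pi g = a /\ pi h = b /\ rep_rel le H g h.

(* Main.v *)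
Require Import Defs.
From mathcomp Require Import all_boot all_algebra.
From Stdlib Require Import Classical.
Import GRing.Theory.
Local Open Scope ring_scope.

Section Aux.
Context {G : zmodType} {le : G -> G -> Prop} {H : G -> Prop}
  (hG : cqoag le) (hH : is_subgroup H) (hconv : qconvex le H).

Let refl : forall x, le x x. Proof. by case: hG => [[]]. Qed.
Let trans {x y z} : le x y -> le y z -> le x z. Proof. by case: hG => [[_ [t _]] _]; apply: t. Qed.
Let tot : forall x y, le x y \/ le y x. Proof. by case: hG => [[_ []]]. Qed.
Let Q1 {x} : qsim le x 0 -> x = 0. Proof. by case: hG => [_ [q _]]; apply: q. Qed.
Let Q2 {x y z} : le x y -> ~ qsim le y z -> le (x + z) (y + z).
Proof. by case: hG => [_ [_ q]]; apply: q. Qed.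
Let H0 : H 0. Proof. by case: hH. Qed.
Let HB {x y} : H x -> H y -> H (x - y). Proof. by case: hH => _ b; apply: b. Qed.
Let HN {x} : H x -> H (- x). Proof. by move=> hx; have := HB H0 hx; rewrite add0r. Qed.
Let HD {x y} : H x -> H y -> H (x + y).
Proof. by move=> hx hy; have := HB hx (HN hy); rewrite opprK. Qed.

Lemma Hns {x h} : ~ H x -> H h -> ~ qsim le x h.
Proof. by move=> nx hh [a b]; apply: nx; exact: (hconv h h x hh hh b a). Qed.
Lemma Hns' {x h} : ~ H x -> H h -> ~ qsim le h x.
Proof. by move=> nx hh [a b]; apply: (Hns nx hh); split. Qed.

Lemma below {x s} : ~ H x -> H s -> le x s -> forall t, H t -> le x t.
Proof.
move=> nx hs xs t ht; case: (tot x t) => // tx; exfalso; apply: nx.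
exact: (hconv t s x ht hs tx xs).
Qed.
Lemma above {x s} : ~ H x -> H s -> le s x -> forall t, H t -> le t x.
Proof.
move=> nx hs sx t ht; case: (tot t x) => // xt; exfalso; apply: nx.
exact: (hconv s t x hs ht sx xt).
Qed.

Lemma Lm {x} z : le x 0 -> le (x + z) z.
Proof.
move=> x0; case: (eqVneq z 0) => [->|nz]; first by rewrite addr0.
have := Q2 x0 (z := z); rewrite add0r; apply => -[a b]; move/eqP: nz; apply.
by apply: Q1; split.
Qed.

Lemma B1 {x} : le 0 x -> ~ qsim le x (- x) -> le (- x) 0.
Proof. by move=> h n; have := Q2 h n; rewrite add0r subrr. Qed.

Lemma LV {y h} : ~ H y -> qsim le y (- y) -> H h -> le y (y + h).
Proof.
move=> ny [yy1 yy2] hh.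
case: (tot 0 h) => [h0|h0].
  by have := Q2 h0 (Hns' ny hh); rewrite add0r addrC.
have mh : le 0 (- h) by have := Lm (- h) h0; rewrite subrr.
have nmy : ~ H (- y) by move=> c; apply: ny; rewrite -[y]opprK; apply: HN.
have := Q2 mh (Hns' nmy (HN hh)); rewrite add0r -opprD [h + y]addrC => e.
have ye : le y (- (y + h)) := trans yy1 e.
set w := y + h in ye *.
suff : le (- w) w by apply: trans.
case: (classic (qsim le w (- w))) => [[_ //]|nw].
have w0 : le 0 w.
  case: (tot 0 w) => // w0; exfalso.
  have := Lm (- h) w0; rewrite /w addrK => yh.
  have y0 : le y 0 := below ny (HN hh) yh _ H0.
  have my0 : le (- y) 0 := trans yy2 y0.
  have := Lm y my0; rewrite addNr => y0'.
  by apply: ny; rewrite (Q1 (conj y0 y0')).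
exact: trans (B1 w0 nw) w0.
Qed.

Lemma P1 {g1 g2 h} : ~ H (g1 - g2) -> le g1 g2 -> H h -> le g1 (g2 + h).
Proof.
move=> nd l12 hh.
case: (classic (H g2)) => hg2.
  have ng1 : ~ H g1 by move=> c; apply: nd; apply: HB.
  exact: (below ng1 hg2 l12 _ (HD hg2 hh)).
case: (tot (g1 - g2) h) => dh.
  by have := Q2 dh (Hns' hg2 hh); rewrite subrK addrC.
have d0 : le 0 (g1 - g2) := above nd hh dh _ H0.
have sq : qsim le g2 (- g2).
  apply: NNPP => n; have := Q2 l12 n; rewrite subrr => d0'.
  by apply: nd; rewrite (Q1 (conj d0' d0)).
exact: trans l12 (LV hg2 sq hh).
Qed.

Lemma P2 {g1 g2 h} : ~ H (g1 - g2) -> le g1 g2 -> H h -> le (g1 + h) g2.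
Proof.
move=> nd l12 hh.
case: (classic (H g2)) => hg2.
  have ng1 : ~ H g1 by move=> c; apply: nd; apply: HB.
  have g10 := below ng1 hg2 l12 _ H0.
  have := Lm h g10 => e.
  have ng1h : ~ H (g1 + h) by move=> c; apply: ng1; have := HB c hh; rewrite addrK.
  exact: (below ng1h hh e _ hg2).
have e := P1 nd l12 (HN hh).
have n2 : ~ H (g2 - h) by move=> c; apply: hg2; have := HD c hh; rewrite subrK.
by have := Q2 e (Hns n2 hh); rewrite subrK.
Qed.

Lemma Part1 g1 g2 h1 h2 : ~ H (g1 - g2) -> le g1 g2 -> H h1 -> H h2 ->
  le (g1 + h1) (g2 + h2).
Proof.
move=> nd l12 h1H h2H.
have e := P2 nd l12 h1H.
apply: P1 => //; move=> c; apply: nd.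
by have := HB c h1H; rewrite addrAC addrK.
Qed.

Lemma transH {x y z} : H (x - y) -> H (y - z) -> H (x - z).
Proof. by move=> a b; have := HD a b; rewrite subrKA. Qed.
Lemma symH {x y} : H (x - y) -> H (y - x).
Proof. by move=> a; have := HN a; rewrite opprB. Qed.

Lemma rep_trans {x y z} : rep_rel le H x y -> rep_rel le H y z -> rep_rel le H x z.
Proof.
case=> [a|[na a]]; case=> [b|[nb b]].
- by left; apply: transH a b.
- right; split; first by move=> c; apply: nb; apply: transH (symH a) c.
  by have := Part1 _ _ _ _ nb b a H0; rewrite subrKC addr0.
- right; split; first by move=> c; apply: na; apply: transH c (symH b).
  by have := Part1 _ _ _ _ na a H0 (symH b); rewrite addr0 subrKC.
- case: (classic (H (x - z))) => c; [by left | right; split => //].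
  exact: trans a b.
Qed.

Lemma rep_tot x y : rep_rel le H x y \/ rep_rel le H y x.
Proof.
case: (classic (H (x - y))) => c; first by left; left.
have c' : ~ H (y - x) by move=> d; apply: c; apply: symH.
by case: (tot x y) => l; [left | right]; right.
Qed.

Lemma rep_le {x y} : le x y -> rep_rel le H x y.
Proof. by move=> l; case: (classic (H (x - y))) => c; [left | right]. Qed.

End Aux.

Theorem mainTheorem9 (G : zmodType) (le : G -> G -> Prop) (H : G -> Prop)
  (hG : cqoag le) (hH : is_subgroup H) (hconv : qconvex le H) :
  (forall g1 g2 h1 h2 : G, ~ H (g1 - g2) -> le g1 g2 -> H h1 -> H h2 ->
     le (g1 + h1) (g2 + h2)) /\
  (forall (Q : zmodType) (pi : G -> Q),
     (forall x y, pi (x + y) = pi x + pi y) ->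
     (forall q : Q, exists g, pi g = q) ->
     (forall g, pi g = 0 <-> H g) ->
     (forall g h g' h', pi g = pi g' -> pi h = pi h' ->
        (rep_rel le H g h <-> rep_rel le H g' h')) /\
     total_quasi_order (quot_rel le H pi) /\
     cqoag (quot_rel le H pi) /\
     qo_hom le (quot_rel le H pi) pi).
Proof.
have P1 := Part1 hG hH hconv.
split; first exact: P1.
move=> Q pi hpi hsurj hker.
have pi0 : pi 0 = 0.
  have e := hpi 0 0; rewrite addr0 in e.
  by have := congr1 (fun t => t - pi 0) e; rewrite /= subrr addrK.
have piN : forall x, pi (- x) = - pi x.
  move=> x; have e := hpi x (- x); rewrite subrr pi0 in e.
  by apply: (addrI (pi x)); rewrite -e subrr.
have piB : forall x y, pi (x - y) = pi x - pi y by move=> x y; rewrite hpi piN.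
have keq : forall g g', pi g = pi g' -> H (g' - g).
  by move=> g g' e; apply/hker; rewrite piB e subrr.
have wd1 : forall g h g' h', pi g = pi g' -> pi h = pi h' ->
    rep_rel le H g h -> rep_rel le H g' h'.
  move=> g h g' h' eg eh; have a := keq _ _ eg; have b := keq _ _ eh.
  case=> [c|[nc c]].
  - left; apply: (transH hH a); exact: (transH hH c (symH hH b)).
  - right; split.
      move=> d; apply: nc; apply: (transH hH (symH hH a)); exact: (transH hH d b).
    by have := P1 _ _ _ _ nc c a b; rewrite !subrKC.
have wd : forall g h g' h', pi g = pi g' -> pi h = pi h' ->
    (rep_rel le H g h <-> rep_rel le H g' h').
  by move=> g h g' h' eg eh; split; apply: wd1.
have char : forall a b, quot_rel le H pi a b ->
    forall g h, pi g = a -> pi h = b -> rep_rel le H g h.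
  move=> a b [g0 [h0 [e1 [e2 r]]]] g h ea eb.
  by apply: (wd1 g0 h0); rewrite ?e1 ?ea ?e2 ?eb.
have mk : forall g h, rep_rel le H g h -> quot_rel le H pi (pi g) (pi h).
  by move=> g h r; exists g, h.
have tqo : total_quasi_order (quot_rel le H pi).
  split; [|split].
  - move=> q; case: (hsurj q) => g <-; apply: (mk _ _); left; rewrite subrr.
    by case: hH.
  - move=> a b c r1 r2.
    case: (hsurj a) => g ea; case: (hsurj b) => h eb; case: (hsurj c) => k ec.
    rewrite -ea -ec; apply: (mk _ _).
    exact: (rep_trans hG hH hconv (char _ _ r1 g h ea eb) (char _ _ r2 h k eb ec)).
  - move=> a b; case: (hsurj a) => g <-; case: (hsurj b) => h <-.
    by case: (rep_tot hG hH g h) => r; [left | right]; apply: (mk _ _).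
split; first exact: wd.
split; first exact: tqo.
have hG' := hG; case: hG' => [tq [Q1 Q2]].
split; last first.
  split; first exact: hpi.
  by move=> x y l; apply: (mk _ _); apply: rep_le.
split; first exact: tqo.
split.
- move=> a [r1 r2]; case: (hsurj a) => g ea.
  have s1 := char _ _ r1 g 0 ea pi0; have s2 := char _ _ r2 0 g pi0 ea.
  rewrite -ea; apply/hker.
  case: s1 => [c|[nc c]]; first by rewrite subr0 in c.
  case: s2 => [d|[nd d]].
    by have := symH hH d; rewrite subr0.
  by rewrite (Q1 _ (conj c d)); case: hH.
- move=> a b c r ns.
  case: (hsurj a) => g ea; case: (hsurj b) => h eb; case: (hsurj c) => k ec.
  have r' := char _ _ r g h ea eb.
  rewrite -ea -eb -ec -!hpi; apply: (mk _ _).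
  have E : (g + k) - (h + k) = g - h by rewrite opprD addrACA subrr addr0.
  case: r' => [d|[nd d]]; first by left; rewrite E.
  right; rewrite E; split => //; apply: (Q2 _ _ _) => // -[u v]; apply: ns.
  by rewrite -eb -ec; split; apply: (mk _ _); apply: rep_le.
Qed.
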